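(* Assume the standing setting below, fix $\nu_1,\nu_2,\nu_3\in(0,\infty)$, $0<\alpha_{\max}<\infty$, and let $\bar{\mathcal{R}}(c,s)=\mathcal{R}_c(c)+\nu_1\mathcal{R}_s(s)+\frac{\nu_2}{2}\|s-s_{\mathrm{mod}}\|^2+\frac{\nu_3}{2}\|P(s)-s_{\mathrm{calib}}\|^2$. Let $(c^\ast,s^\ast)$ be an $\bar{\mathcal{R}}$-minimizing solution (a minimizer of $\bar{\mathcal{R}}$ over $\{(c,s):B(c,s)=u^\ast\}$), $u^\ast=B(c^\ast,s^\ast)$, and $u_\delta\in Z$ with $\|u^\ast-u_\delta\|\le\delta$. For $0<\alpha\le\alpha_{\max}$ let $(c^\alpha,s^\alpha)$ be a minimizer of $J^{u_\delta}_{\alpha,\nu_1\alpha,\nu_2\alpha,\nu_3\alpha}$. Suppose that there exist $\kappa_1\in[0,1)$, $\kappa_2\ge0$ and $\xi^\ast=(\xi_{c^\ast},\xi_{s^\ast})\in\partial\bar{\mathcal{R}}(c^\ast,s^\ast)$ such that, for all $(\delta,\alpha)$ considered, $$\langle\xi^\ast,(c^\ast-c,s^\ast-s)\rangle\le\kappa_1D^{\xi^\ast}_{\bar{\mathcal{R}}}((c,s),(c^\ast,s^\ast))+\kappa_2\|B(c,s)-B(c^\ast,s^\ast)\|$$ for all $(c,s)$ with $J^{u_\delta}_{\alpha_{\max},\alpha_{\max}\nu_1,\alpha_{\max}\nu_2,\alpha_{\max}\nu_3}(c,s)\le M$, where $M>\alpha_{\max}(\bar{\mathcal{R}}(c^\ast,s^\ast)+\delta^2/\alpha)$.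 If $\alpha\sim\delta$ (i.e., $m\delta\le\alpha\le M'\delta$ for constants $0<m\le M'$), then as $\delta\to0$ $$D^{\xi^\ast}_{\bar{\mathcal{R}}}((c^\alpha,s^\alpha),(c^\ast,s^\ast))=\mathcal{O}(\delta),\qquad\|B(c^\alpha,s^\alpha)-B(c^\ast,s^\ast)\|=\mathcal{O}(\delta).$$
   Context: Standing setting: $X,Y,Z$ are Hilbert spaces; $X\times Y$ carries the inner product $\langle (c_1,s_1),(c_2,s_2)\rangle=\langle c_1,c_2\rangle_X+\langle s_1,s_2\rangle_Y$. $B:X\times Y\to Z$ is bilinear, satisfies $\|B(c,s)\|_Z\le C\|c\|_X\|s\|_Y$ for some $C>0$, and is sequentially weak-weak continuous. $Y_n\subset Y$ is a finite-dimensional subspace, $P:Y\to Y_n$ is linear and bounded, $s_{\mathrm{calib}}\in Y_n$, $s_{\mathrm{mod}}\in Y$. $\mathcal{R}_c:X\to[0,\infty)$ and $\mathcal{R}_s:Y\to[0,\infty)$ are proper, convex and weakly lower semi-continuous. For $u\in Z$: $J^{u}_{\alpha,\beta,\gamma,\mu}(c,s)=\frac12\|B(c,s)-u\|^2+\frac{\gamma}{2}\|s-s_{\mathrm{mod}}\|^2+\frac{\mu}{2}\|P(s)-s_{\mathrm{calib}}\|^2+\alpha\mathcal{R}_c(c)+\beta\mathcal{R}_s(s)$. For a convex functional $\mathcal{R}$ and $\xi\in\partial\mathcal{R}(x^\ast)$, the Bregman distance is $D^{\xi}_{\mathcal{R}}(x,x^\ast)=\mathcal{R}(x)-\mathcal{R}(x^\ast)-\langle\xi,x-x^\ast\rangle$.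 *)

(* Defs.v *)
From HB Require Import structures.
From mathcomp Require Import all_boot all_order all_algebra.
From mathcomp Require Import all_classical all_reals all_analysis.
Set Implicit Arguments. Unset Strict Implicit. Unset Printing Implicit Defensive.
Import Order.TTheory GRing.Theory Num.Theory.
Import numFieldNormedType.Exports.
Local Open Scope classical_set_scope.
Local Open Scope ring_scope.

Section Defs.
Variable R : realType.

Definition ipnorm (V : lmodType R) (ip : V -> V -> R) (x : V) : R :=
  Num.sqrt (ip x x).

Definition hilbert (V : lmodType R) (ip : V -> V -> R) : Prop :=
  [/\ (forall x y, ip x y = ip y x),
      (forall a x y z, ip (a *: x + y) z = a * ip x z + ip y z),
      (forall x, 0 <= ip x x),
      (forall x, ip x x = 0 -> x = 0) &
      (forall u : nat -> V,
        (forall e : R, 0 < e -> exists N : nat, forall m n : nat,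
            (N <= m)%N -> (N <= n)%N -> ipnorm ip (u m - u n) < e) ->
        exists x : V, (fun n => ipnorm ip (u n - x)) @ \oo --> (0 : R))].

Definition weak_cvg (V : lmodType R) (ip : V -> V -> R) (u : nat -> V) (x : V)
  : Prop := forall y : V, (fun n => ip (u n) y) @ \oo --> ip x y.

Definition prod_ip (X Y : lmodType R) (ipX : X -> X -> R) (ipY : Y -> Y -> R)
  (p q : (X * Y)%type) : R := ipX p.1 q.1 + ipY p.2 q.2.

Definition convex_fun (V : lmodType R) (F : V -> R) : Prop :=
  forall (x y : V) (t : R), 0 <= t -> t <= 1 ->
    F (t *: x + (1 - t) *: y) <= t * F x + (1 - t) * F y.

Definition weakly_lsc (V : lmodType R) (ip : V -> V -> R) (F : V -> R) : Prop :=
  forall (u : nat -> V) (x : V), weak_cvg ip u x ->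
    forall e : R, 0 < e -> exists N : nat, forall n : nat, (N <= n)%N ->
      F x - e < F (u n).

Definition subgrad (V : lmodType R) (ip : V -> V -> R) (F : V -> R) (x xi : V)
  : Prop := forall y : V, F x + ip xi (y - x) <= F y.

Definition bregman (V : lmodType R) (ip : V -> V -> R) (F : V -> R) (xi y x : V)
  : R := F y - F x - ip xi (y - x).

Definition findim_subspace (V : lmodType R) (W : set V) : Prop :=
  exists (k : nat) (e : 'I_k -> V),
    forall y : V, W y <-> exists a : 'I_k -> R, y = \sum_(i < k) a i *: e i.

Definition Jfun (X Y Z : lmodType R) (ipY : Y -> Y -> R) (ipZ : Z -> Z -> R)
  (B : X -> Y -> Z) (P : Y -> Y) (s_calib s_mod : Y)
  (Rc : X -> R) (Rs : Y -> R) (u : Z) (alpha beta gamma mu : R)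
  (p : (X * Y)%type) : R :=
  2^-1 * ipnorm ipZ (B p.1 p.2 - u) ^+ 2
  + gamma / 2 * ipnorm ipY (p.2 - s_mod) ^+ 2
  + mu / 2 * ipnorm ipY (P p.2 - s_calib) ^+ 2
  + alpha * Rc p.1 + beta * Rs p.2.

Definition Rbar (X Y : lmodType R) (ipY : Y -> Y -> R)
  (P : Y -> Y) (s_calib s_mod : Y) (Rc : X -> R) (Rs : Y -> R)
  (nu1 nu2 nu3 : R) (p : (X * Y)%type) : R :=
  Rc p.1 + nu1 * Rs p.2 + nu2 / 2 * ipnorm ipY (p.2 - s_mod) ^+ 2
  + nu3 / 2 * ipnorm ipY (P p.2 - s_calib) ^+ 2.

End Defs.

(* Main.v *)
Require Import Defs.
From HB Require Import structures.
From mathcomp Require Import all_boot all_order all_algebra.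
From mathcomp Require Import all_classical all_reals all_analysis.
Import Order.TTheory GRing.Theory Num.Theory.
Import numFieldNormedType.Exports.
Local Open Scope classical_set_scope.
Local Open Scope ring_scope.
From mathcomp Require Import lra ring.

Section IP.
Variables (R : realType) (V : lmodType R) (ip : V -> V -> R).
Hypothesis hs : forall x y, ip x y = ip y x.
Hypothesis hl : forall a x y z, ip (a *: x + y) z = a * ip x z + ip y z.

Lemma ipDl x y z : ip (x + y) z = ip x z + ip y z.
Proof. by have := hl 1 x y z; rewrite scale1r mul1r. Qed.
Lemma ip0l z : ip 0 z = 0.
Proof.
have h := ipDl 0 0 z; rewrite addr0 in h.
have h' : ip 0 z + ip 0 z = ip 0 z + 0 by rewrite addr0 -h.
exact: addrI h'.
Qed.
Lemma ipNl x z : ip (- x) z = - ip x z.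
Proof. by rewrite -[- x]addr0 -scaleN1r hl ip0l addr0 mulN1r. Qed.
Lemma ipBl x y z : ip (x - y) z = ip x z - ip y z.
Proof. by rewrite ipDl ipNl. Qed.
Lemma ipBr x y z : ip z (x - y) = ip z x - ip z y.
Proof. by rewrite hs ipBl (hs x) (hs y). Qed.
Lemma ipDr x y z : ip z (x + y) = ip z x + ip z y.
Proof. by rewrite hs ipDl (hs x) (hs y). Qed.

Lemma ip_para a b : 0 <= ip (a + b) (a + b) ->
  ip (a - b) (a - b) <= 2 * ip a a + 2 * ip b b.
Proof.
rewrite !ipBl !ipBr !ipDl !ipDr (hs b a) => h; lra.
Qed.
End IP.
Arguments ipBr {R V ip} hs hl x y z.
Arguments ip_para {R V ip} hs hl a b.

Lemma ipnorm_sq {R : realType} {V : lmodType R} {ip : V -> V -> R} {x} :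
  0 <= ip x x -> ipnorm ip x ^+ 2 = ip x x.
Proof. by move=> h; rewrite /ipnorm sqr_sqrtr. Qed.

Lemma ipnorm_ge0 {R : realType} {V : lmodType R} (ip : V -> V -> R) x :
  0 <= ipnorm ip x.
Proof. exact: sqrtr_ge0. Qed.
Lemma num_r (R : realType) (a d D r e2 w2 k1 k2 M' : R) :
  0 < d -> 0 < a -> a <= M' * d -> 0 <= D -> 0 <= r -> 0 <= k1 < 1 -> 0 <= k2 ->
  0 <= e2 -> w2 <= d^+2 -> r^+2 <= 2*e2 + 2*w2 ->
  e2/2 + a*D <= w2/2 + a*(k1*D + k2*r) ->
  r <= (4 + 4*M'*k2) * d.
Proof.
move=> d0 a0 aM D0 r0 /andP[k10 k11] k20 e0 wd rr main.
have h1 : (1 - k1) * (a * D) >= 0 by apply: mulr_ge0; [lra| apply: mulr_ge0; lra].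
have h2 : a * k2 * r <= M' * d * k2 * r.
  by apply: ler_wpM2r => //; apply: ler_wpM2r.
have h3 : r^+2 <= 4 * d^+2 + 4 * M' * d * k2 * r by nra.
have M'0 : 0 <= M' by nra.
rewrite leNgt; apply/negP => hr.
have rp : 0 < r by apply: le_lt_trans hr; nra.
have : (4 + 4*M'*k2) * d * r < r^+2.
  by rewrite expr2 ltr_pM2r.
move=> hh.
have : d * r < d * d by nra.
rewrite ltr_pM2l // => hrd.
have : d < (4 + 4*M'*k2) * d by nra.
lra.
Qed.

Lemma num_D (R : realType) (a d D r e2 w2 k1 k2 m K : R) :
  0 < d -> 0 < m -> m * d <= a -> 0 <= D -> 0 <= r -> 0 <= k1 < 1 -> 0 <= k2 ->
  0 <= e2 -> w2 <= d^+2 -> r <= K * d -> 0 <= K ->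
  e2/2 + a*D <= w2/2 + a*(k1*D + k2*r) ->
  D <= ((m^-1 + k2 * K) / (1 - k1)) * d.
Proof.
move=> d0 m0 ma D0 r0 /andP[k10 k11] k20 e0 wd rK K0 main.
have a0 : 0 < a by apply: lt_le_trans ma; apply: mulr_gt0.
have h1 : a * ((1 - k1) * D) <= d^+2 + a * (k2 * K * d).
  have : a * (k2 * r) <= a * (k2 * K * d).
    by rewrite -mulrA; apply: ler_wpM2l; [lra|apply: ler_wpM2l].
  nra.
have h2 : d^+2 <= a * (m^-1 * d).
  have e : d^+2 = m^-1 * (m * d * d).
    by rewrite expr2 -!mulrA mulKf // lt0r_neq0.
  rewrite mulrCA e; apply: ler_wpM2l; first by rewrite invr_ge0 ltW.
  by apply: ler_wpM2r => //; apply: ltW.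
have h3 : (1 - k1) * D <= m^-1 * d + k2 * K * d.
  by rewrite -(ler_pM2l a0) mulrDr; lra.
rewrite mulrAC ler_pdivlMr; last lra.
lra.
Qed.
Arguments num_r {R a d D r e2 w2 k1 k2 M'}.
Arguments num_D {R a d D r e2 w2 k1 k2 m K}.
Theorem mainTheorem5 (R : realType) (X Y Z : lmodType R)
  (ipX : X -> X -> R) (ipY : Y -> Y -> R) (ipZ : Z -> Z -> R)
  (hX : hilbert ipX) (hY : hilbert ipY) (hZ : hilbert ipZ)
  (B : X -> Y -> Z)
  (hBl : forall (a : R) (c1 c2 : X) (s : Y), B (a *: c1 + c2) s = a *: B c1 s + B c2 s)
  (hBr : forall (a : R) (c : X) (s1 s2 : Y), B c (a *: s1 + s2) = a *: B c s1 + B c s2)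
  (hBbd : exists C : R, 0 < C /\ forall c s,
      ipnorm ipZ (B c s) <= C * ipnorm ipX c * ipnorm ipY s)
  (hBweak : forall (cn : nat -> X) (sn : nat -> Y) (c : X) (s : Y),
      weak_cvg ipX cn c -> weak_cvg ipY sn s ->
      weak_cvg ipZ (fun n => B (cn n) (sn n)) (B c s))
  (Yn : set Y) (hYn : findim_subspace Yn)
  (P : Y -> Y)
  (hPlin : forall (a : R) (y1 y2 : Y), P (a *: y1 + y2) = a *: P y1 + P y2)
  (hPbd : exists K : R, forall y, ipnorm ipY (P y) <= K * ipnorm ipY y)
  (hPim : forall y, Yn (P y))
  (s_calib s_mod : Y) (hcalib : Yn s_calib)
  (Rc : X -> R) (Rs : Y -> R)
  (hRc0 : forall c, 0 <= Rc c) (hRs0 : forall s, 0 <= Rs s)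
  (hRcconv : convex_fun Rc) (hRsconv : convex_fun Rs)
  (hRclsc : weakly_lsc ipX Rc) (hRslsc : weakly_lsc ipY Rs)
  (nu1 nu2 nu3 alpha_max : R)
  (hnu1 : 0 < nu1) (hnu2 : 0 < nu2) (hnu3 : 0 < nu3) (hamax : 0 < alpha_max)
  (cs : X) (ss : Y)
  (hmin : forall (c : X) (s : Y), B c s = B cs ss ->
      Rbar ipY P s_calib s_mod Rc Rs nu1 nu2 nu3 (cs, ss)
      <= Rbar ipY P s_calib s_mod Rc Rs nu1 nu2 nu3 (c, s))
  (delta0 : R) (hdelta0 : 0 < delta0)
  (u : R -> Z) (alpha : R -> R) (ca : R -> X) (sa : R -> Y)
  (hu : forall delta, 0 < delta <= delta0 ->
      ipnorm ipZ (B cs ss - u delta) <= delta)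
  (halpha : forall delta, 0 < delta <= delta0 -> 0 < alpha delta <= alpha_max)
  (hcsa : forall delta, 0 < delta <= delta0 -> forall (c : X) (s : Y),
      Jfun ipY ipZ B P s_calib s_mod Rc Rs (u delta) (alpha delta)
        (nu1 * alpha delta) (nu2 * alpha delta) (nu3 * alpha delta) (ca delta, sa delta)
      <= Jfun ipY ipZ B P s_calib s_mod Rc Rs (u delta) (alpha delta)
        (nu1 * alpha delta) (nu2 * alpha delta) (nu3 * alpha delta) (c, s))
  (kappa1 kappa2 : R) (xic : X) (xis : Y) (M : R)
  (hk1 : 0 <= kappa1 < 1) (hk2 : 0 <= kappa2)
  (hxi : subgrad (prod_ip ipX ipY)
      (Rbar ipY P s_calib s_mod Rc Rs nu1 nu2 nu3) (cs, ss) (xic, xis))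
  (hM : forall delta, 0 < delta <= delta0 ->
      alpha_max * (Rbar ipY P s_calib s_mod Rc Rs nu1 nu2 nu3 (cs, ss)
                   + delta ^+ 2 / alpha delta) < M)
  (hsource : forall delta, 0 < delta <= delta0 -> forall (c : X) (s : Y),
      Jfun ipY ipZ B P s_calib s_mod Rc Rs (u delta) alpha_max
        (alpha_max * nu1) (alpha_max * nu2) (alpha_max * nu3) (c, s) <= M ->
      prod_ip ipX ipY (xic, xis) (cs - c, ss - s)
      <= kappa1 * bregman (prod_ip ipX ipY)
                    (Rbar ipY P s_calib s_mod Rc Rs nu1 nu2 nu3) (xic, xis) (c, s) (cs, ss)
         + kappa2 * ipnorm ipZ (B c s - B cs ss))
  (m M' : R) (hm : 0 < m) (hmM : m <= M')
  (hasim : forall delta, 0 < delta <= delta0 ->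
      m * delta <= alpha delta <= M' * delta) :
  exists (C delta1 : R), 0 < delta1 /\
    forall delta, 0 < delta < delta1 ->
      `| bregman (prod_ip ipX ipY) (Rbar ipY P s_calib s_mod Rc Rs nu1 nu2 nu3)
           (xic, xis) (ca delta, sa delta) (cs, ss) | <= C * delta
      /\ ipnorm ipZ (B (ca delta) (sa delta) - B cs ss) <= C * delta.
Proof.
case: hX => sX lX pX _ _.
case: hY => sY lY pY _ _.
case: hZ => sZ lZ pZ _ _.
case/andP: hk1 => k10 k11.
have M'0 : 0 <= M' by apply: le_trans hmM; apply: ltW.
set K := 4 + 4 * M' * kappa2.
set C2 := (m^-1 + kappa2 * K) / (1 - kappa1).
have K0 : 0 <= K by rewrite /K; nra.
have C20 : 0 <= C2.
  rewrite /C2; apply: divr_ge0; last lra.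
  apply: addr_ge0; [by rewrite invr_ge0 ltW | exact: mulr_ge0].
exists (K + C2), delta0; split => // delta /andP[d0 d1].
have hd : 0 < delta <= delta0 by rewrite d0 ltW.
set Rb := Rbar ipY P s_calib s_mod Rc Rs nu1 nu2 nu3.
have /andP[a0 aM] := halpha _ hd.
have /andP[ma aM'] := hasim _ hd.
set a := alpha delta in a0 aM ma aM' *.
have JE : forall (al : R) c s, Jfun ipY ipZ B P s_calib s_mod Rc Rs (u delta) al
     (nu1 * al) (nu2 * al) (nu3 * al) (c, s)
   = 2^-1 * ipZ (B c s - u delta) (B c s - u delta) + al * Rb (c, s).
  move=> al c s; rewrite /Jfun /Rb /Rbar /= ipnorm_sq //; ring.
have JE' : forall c s, Jfun ipY ipZ B P s_calib s_mod Rc Rs (u delta) alpha_max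
     (alpha_max * nu1) (alpha_max * nu2) (alpha_max * nu3) (c, s)
   = 2^-1 * ipZ (B c s - u delta) (B c s - u delta) + alpha_max * Rb (c, s).
  move=> c s; rewrite /Jfun /Rb /Rbar /= ipnorm_sq //; ring.
have h1 := hcsa _ hd cs ss; rewrite !JE -/a in h1.
set e2 := ipZ _ _ in h1.
set w2 := ipZ (B cs ss - u delta) _ in h1.
have e20 : 0 <= e2 by apply: pZ.
have w2d : w2 <= delta ^+ 2.
  have ew : w2 = ipnorm ipZ (B cs ss - u delta) ^+ 2 by rewrite ipnorm_sq.
  have := hu _ hd; have := ipnorm_ge0 ipZ (B cs ss - u delta); rewrite ew; nra.
set Rbp := Rb (ca delta, sa delta) in h1.
set Rbs := Rb (cs, ss) in h1.
have hJ : Jfun ipY ipZ B P s_calib s_mod Rc Rs (u delta) alpha_max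
        (alpha_max * nu1) (alpha_max * nu2) (alpha_max * nu3) (ca delta, sa delta) <= M.
  rewrite JE' -/e2 -/Rbp; apply: le_trans (ltW (hM _ hd)).
  rewrite -/Rb -/Rbs -/a.
  set q := delta ^+ 2 / a.
  have hq : delta ^+ 2 = q * a by rewrite /q divfK // lt0r_neq0.
  have q0 : 0 <= q by apply: divr_ge0; [apply: sqr_ge0 | apply: ltW].
  have hR : Rbp <= Rbs + q / 2.
    rewrite -(ler_pM2l a0); nra.
  have : 0 <= (alpha_max - a) * (Rbs + q / 2 - Rbp) by apply: mulr_ge0; lra.
  nra.
have hs := hsource _ hd _ _ hJ.
have hsub := hxi (ca delta, sa delta).
rewrite /bregman -/Rb -/Rbp -/Rbs in hs hsub *.
set g := prod_ip ipX ipY (xic, xis) _ in hsub hs *.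
have hg : prod_ip ipX ipY (xic, xis) (cs - ca delta, ss - sa delta) = - g.
  rewrite /g /prod_ip /= !(ipBr sX lX) !(ipBr sY lY).
  ring.
rewrite hg in hs.
set r := ipnorm ipZ _ in hs.
set D := Rbp - Rbs - g.
have D0 : 0 <= D by rewrite /D; lra.
have r0 : 0 <= r by apply: ipnorm_ge0.
have hr2 : r ^+ 2 <= 2 * e2 + 2 * w2.
  rewrite /r ipnorm_sq //.
  have -> : B (ca delta) (sa delta) - B cs ss
      = (B (ca delta) (sa delta) - u delta) - (B cs ss - u delta).
    by rewrite opprB addrA subrK.
  by apply: (ip_para sZ lZ); apply: pZ.
have hmain : e2 / 2 + a * D <= w2 / 2 + a * (kappa1 * D + kappa2 * r).
  have : a * (- g) <= a * (kappa1 * D + kappa2 * r) by rewrite ler_pM2l.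
  rewrite /D; nra.
have hrK : r <= K * delta.
  exact: (num_r d0 a0 aM' D0 r0 (introT andP (conj k10 k11)) hk2 e20 w2d hr2 hmain).
have hDC : D <= C2 * delta.
  exact: (num_D d0 hm ma D0 r0 (introT andP (conj k10 k11)) hk2 e20 w2d hrK K0 hmain).
rewrite ger0_norm //; split.
  by apply: (le_trans hDC); apply: ler_wpM2r; [exact: ltW | lra].
by apply: (le_trans hrK); apply: ler_wpM2r; [exact: ltW | lra].
Qed.
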